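(* For any two tensors $\mathcal{L}_0,\mathcal{E}_0\in\mathbb{R}^{N_1\times N_2\times N_3}$, if $\xi(\mathcal{L}_0)\,\mu(\mathcal{E}_0)<1$ then $T(\mathcal{L}_0)\cap\Omega(\mathcal{E}_0)=\{\mathbf{0}\}$.
   Context: For $\mathcal{A}\in\mathbb{R}^{N_1\times N_2\times N_3}$ write $A^{(k)}=\mathcal{A}(:,:,k)$ for its frontal slices. $\mathrm{bcirc}(\mathcal{A})\in\mathbb{R}^{N_1N_3\times N_2N_3}$ is the block circulant matrix whose $(i,j)$ block is $A^{(((i-j)\bmod N_3)+1)}$; $\mathrm{unfold}(\mathcal{A})$ stacks the frontal slices vertically and $\mathrm{fold}$ is its inverse. The t-product is $\mathcal{A}*\mathcal{B}=\mathrm{fold}(\mathrm{bcirc}(\mathcal{A})\,\mathrm{unfold}(\mathcal{B}))$. The transpose $\mathcal{A}^\top$ transposes each frontal slice and reverses the order of slices $2,\dots,N_3$. The identity tensor has first frontal slice the identity matrix and other slices zero; f-diagonal means every frontal slice is diagonal. Every $\mathcal{A}$ of tubal rank $R$ has a skinny t-SVD $\mathcal{A}=\mathcal{U}*\mathcal{S}*\mathcal{V}^\top$, $\mathcal{U}\in\mathbb{R}^{N_1\times R\times N_3}$, $\mathcal{V}\in\mathbb{R}^{N_2\times R\times N_3}$, $\mathcal{U}^\top*\mathcal{U}=\mathcal{V}^\top*\mathcal{V}=\mathcal{I}$, $\mathcal{S}\in\mathbb{R}^{R\times R\times N_3}$ f-diagonal. The tensor spectral norm is $\|\mathcal{A}\|=\|\mathrm{bcirc}(\mathcal{A})\|$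 (largest singular value); $\|\mathcal{A}\|_\infty=\max|\mathcal{A}(n_1,n_2,n_3)|$. $T(\mathcal{A})=\{\mathcal{U}*\mathcal{Y}^\top+\mathcal{W}*\mathcal{V}^\top:\mathcal{Y}\in\mathbb{R}^{N_2\times R\times N_3},\mathcal{W}\in\mathbb{R}^{N_1\times R\times N_3}\}$; $\Omega(\mathcal{A})=\{\mathcal{N}:\mathrm{support}(\mathcal{N})\subseteq\mathrm{support}(\mathcal{A})\}$. Define $\xi(\mathcal{A})=\max_{\mathcal{N}\in T(\mathcal{A}),\|\mathcal{N}\|\le1}\|\mathcal{N}\|_\infty$ and $\mu(\mathcal{A})=\max_{\mathcal{N}\in\Omega(\mathcal{A}),\|\mathcal{N}\|_\infty\le1}\|\mathcal{N}\|$. *)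

(* Defs.v *)
From HB Require Import structures.
From mathcomp Require Import all_boot all_order all_algebra.
From mathcomp Require Import classical_sets boolp reals.
Set Implicit Arguments. Unset Strict Implicit. Unset Printing Implicit Defensive.
Import Order.TTheory GRing.Theory Num.Theory.
Local Open Scope ring_scope.
Local Open Scope classical_set_scope.

(* A third-order tensor in R^{n1 x n2 x n3}, stored by frontal slices:
   A k = A(:,:,k) (0-indexed k). *)
Definition tensor (R : Type) (n1 n2 n3 : nat) := {ffun 'I_n3 -> 'M[R]_(n1, n2)}.

Section Tensors.
Variable R : realType.

(* ((i - j) mod n), 0-indexed block circulant index *)
Lemma cidx_proof n (i j : 'I_n) : ((i + n - j) %% n < n)%N.
Proof. by rewrite ltn_pmod // (leq_ltn_trans (leq0n i) (ltn_ord i)). Qed.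
Definition cidx n (i j : 'I_n) : 'I_n := Ordinal (cidx_proof i j).

(* (- k) mod n : index of the slice of A used for slice k of A^T *)
Lemma tidx_proof n (k : 'I_n) : ((n - k) %% n < n)%N.
Proof. by rewrite ltn_pmod // (leq_ltn_trans (leq0n k) (ltn_ord k)). Qed.
Definition tidx n (k : 'I_n) : 'I_n := Ordinal (tidx_proof k).

Definition bcirc n1 n2 n3 (A : tensor R n1 n2 n3)
  : 'M[R]_(\sum_(i < n3) n1, \sum_(j < n3) n2) :=
  \mxblock_(i < n3, j < n3) A (cidx i j).

Definition unfold n1 n2 n3 (A : tensor R n1 n2 n3) : 'M[R]_(\sum_(i < n3) n1, n2) :=
  \mxcol_(i < n3) A i.

Definition fold n1 n2 n3 (M : 'M[R]_(\sum_(i < n3) n1, n2)) : tensor R n1 n2 n3 :=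
  [ffun k => submxcol M k].

Definition tprod n1 n2 n3 n4 (A : tensor R n1 n2 n3) (B : tensor R n2 n4 n3)
  : tensor R n1 n4 n3 := fold (bcirc A *m unfold B).

(* tensor transpose: transpose each slice and reverse slices 2..n3 *)
Definition ttr n1 n2 n3 (A : tensor R n1 n2 n3) : tensor R n2 n1 n3 :=
  [ffun k => (A (tidx k))^T].

Definition tzero n1 n2 n3 : tensor R n1 n2 n3 := [ffun => 0].

Definition tid n n3 : tensor R n n n3 :=
  [ffun k => if nat_of_ord k == 0%N then 1%:M else 0].

Definition fdiag n n3 (S : tensor R n n n3) : Prop :=
  forall k (i j : 'I_n), i != j -> S k i j = 0.

(* skinny t-SVD of A with tubal rank r: A = U * S * V^T, U^T*U = V^T*V = I,
   S f-diagonal with all r diagonal tubes nonzero (so r is the tubal rank) *)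
Definition skinny_tSVD n1 n2 n3 r (A : tensor R n1 n2 n3)
  (U : tensor R n1 r n3) (S : tensor R r r n3) (V : tensor R n2 r n3) : Prop :=
  [/\ A = tprod (tprod U S) (ttr V),
      tprod (ttr U) U = tid r n3,
      tprod (ttr V) V = tid r n3,
      fdiag S &
      forall i : 'I_r, exists k, S k i i != 0].

Definition vnorm n (x : 'cV[R]_n) : R := Num.sqrt (\sum_i (x i 0) ^+ 2).
Definition specnorm m n (M : 'M[R]_(m, n)) : R :=
  sup [set vnorm (M *m x) | x in [set x : 'cV[R]_n | vnorm x <= 1]].

Definition tnorm n1 n2 n3 (A : tensor R n1 n2 n3) : R := specnorm (bcirc A).

Definition tnorm_inf n1 n2 n3 (A : tensor R n1 n2 n3) : R :=
  \big[Num.max/0]_(k < n3) \big[Num.max/0]_(i < n1) \big[Num.max/0]_(j < n2)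
     `|A k i j|.

(* T(A) built from the t-SVD factors U, V of A *)
Definition Tspace n1 n2 n3 r (U : tensor R n1 r n3) (V : tensor R n2 r n3)
  : set (tensor R n1 n2 n3) :=
  [set N : tensor R n1 n2 n3 | exists (Y : tensor R n2 r n3) (W : tensor R n1 r n3),
      N = tprod U (ttr Y) + tprod W (ttr V)].

Definition Omega n1 n2 n3 (A : tensor R n1 n2 n3) : set (tensor R n1 n2 n3) :=
  [set N : tensor R n1 n2 n3 | forall k i j, A k i j = 0 -> N k i j = 0].

Definition xi n1 n2 n3 r (U : tensor R n1 r n3) (V : tensor R n2 r n3) : R :=
  sup [set tnorm_inf N | N in Tspace U V `&` [set N : tensor R n1 n2 n3 | tnorm N <= 1]].

Definition mu n1 n2 n3 (A : tensor R n1 n2 n3) : R :=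
  sup [set tnorm N | N in Omega A `&` [set N : tensor R n1 n2 n3 | tnorm_inf N <= 1]].

End Tensors.

(* Main.v *)
Require Import Defs.
From HB Require Import structures.
From mathcomp Require Import all_boot all_order all_algebra.
From mathcomp Require Import classical_sets boolp reals.
From mathcomp Require Import lra.
Set Implicit Arguments. Unset Strict Implicit. Unset Printing Implicit Defensive.
Import Order.TTheory GRing.Theory Num.Theory.
Local Open Scope ring_scope.
Local Open Scope classical_set_scope.

Section Proofs.
Variable R : realType.

Lemma vnorm_ge0 n (x : 'cV[R]_n) : 0 <= vnorm x.
Proof. exact: sqrtr_ge0. Qed.

Lemma vnorm_scale n (c : R) (x : 'cV[R]_n) : vnorm (c *: x) = `|c| * vnorm x.
Proof.
rewrite /vnorm -sqrtr_sqr -sqrtrM ?sqr_ge0 //; congr Num.sqrt.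
by rewrite mulr_sumr; apply: eq_bigr => i _; rewrite mxE exprMn.
Qed.

Lemma vnorm0 n : vnorm (0 : 'cV[R]_n) = 0.
Proof. by rewrite /vnorm big1 ?sqrtr0 // => i _; rewrite mxE expr0n. Qed.

Lemma abs_le_vnorm n (x : 'cV[R]_n) i : `|x i 0| <= vnorm x.
Proof.
rewrite -sqrtr_sqr /vnorm ler_wsqrtr //.
by rewrite (bigD1 i) //= lerDl sumr_ge0 // => j _; exact: sqr_ge0.
Qed.

Lemma vnorm_bound m n (M : 'M[R]_(m, n)) (t : R) (x : 'cV[R]_n) :
  0 <= t -> (forall a b, `|M a b| <= t) -> vnorm x <= 1 ->
  vnorm (M *m x) <= Num.sqrt (m%:R * (n%:R * t) ^+ 2).
Proof.
move=> t0 Mt x1; rewrite /vnorm ler_wsqrtr //.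
have h : forall a, ((M *m x) a 0) ^+ 2 <= (n%:R * t) ^+ 2.
  move=> a.
  have ha : `|(M *m x) a 0| <= n%:R * t.
    rewrite mxE; apply: le_trans (ler_norm_sum _ _ _) _.
    have hb : forall b, `|M a b * x b 0| <= t.
      move=> b; rewrite normrM -[t]mulr1 ler_pM //.
      have := abs_le_vnorm x b; move: x1; lra.
    apply: le_trans (ler_sum _ (fun b _ => hb b)) _.
    by rewrite sumr_const card_ord [X in _ <= X]mulr_natl.
  have := normr_ge0 ((M *m x) a 0); have := real_normK (num_real ((M *m x) a 0)).
  move: ((M *m x) a 0) ha => y; move: (n%:R * t) => z; nra.
apply: le_trans (ler_sum _ (fun a _ => h a)) _.
by rewrite sumr_const card_ord [X in _ <= X]mulr_natl.
Qed.

Definition snset m n (M : 'M[R]_(m, n)) :=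
  [set vnorm (M *m x) | x in [set x : 'cV[R]_n | vnorm x <= 1]].

Lemma bigmax_ge0 (I : finType) (F : I -> R) : 0 <= \big[Num.max/0]_(i : I) F i.
Proof. by elim/big_rec: _ => // i x _ hx; rewrite le_max hx orbT. Qed.

Lemma snset_ub m n (M : 'M[R]_(m, n)) : has_ubound (snset M).
Proof.
pose T := \big[Num.max/0]_(a : 'I_m) \big[Num.max/0]_(b : 'I_n) `|M a b|.
exists (Num.sqrt (m%:R * (n%:R * T) ^+ 2)) => _ [x /= x1 <-].
apply: vnorm_bound => //; first exact: bigmax_ge0.
move=> a b; apply: le_trans (le_bigmax _ _ a).
exact: (le_bigmax _ (fun b => `|M a b|) b).
Qed.

Lemma specnorm_ub m n (M : 'M[R]_(m, n)) x :
  vnorm x <= 1 -> vnorm (M *m x) <= specnorm M.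
Proof. by move=> x1; apply: (ub_le_sup (snset_ub M)); exists x. Qed.

Lemma specnorm_le m n (M : 'M[R]_(m, n)) B :
  (forall x, vnorm x <= 1 -> vnorm (M *m x) <= B) -> specnorm M <= B.
Proof.
move=> h; apply: ge_sup.
  by exists (vnorm (M *m 0)), 0 => //=; rewrite vnorm0.
by move=> _ [x /= x1 <-]; exact: h.
Qed.

Lemma specnorm_scale_le m n (M : 'M[R]_(m, n)) c :
  0 <= c -> specnorm (c *: M) <= c * specnorm M.
Proof.
move=> c0; apply: specnorm_le => x x1.
rewrite -scalemxAl vnorm_scale ger0_norm // ler_wpM2l //.
exact: specnorm_ub.
Qed.

Lemma entry_le_specnorm m n (M : 'M[R]_(m, n)) a b : `|M a b| <= specnorm M.
Proof.
have d1 : vnorm (delta_mx b 0 : 'cV[R]_n) <= 1.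
  rewrite /vnorm (bigD1 b) //= big1 ?addr0.
    by rewrite /delta_mx mxE !eqxx expr1n sqrtr1.
  by move=> i /negPf ib; rewrite /delta_mx mxE ib expr0n.
apply: le_trans (specnorm_ub M d1).
by rewrite -colE; have := abs_le_vnorm (col b M) a; rewrite mxE.
Qed.


Lemma bcirc_entry n1 n2 n3 (N : tensor R n1 n2 n3) a b :
  exists k i j, bcirc N a b = N k i j.
Proof. by rewrite /bcirc /mxblock mxE; do 3 eexists. Qed.

Lemma cidx0 n (k : 'I_n) : cidx k (Ordinal (leq_ltn_trans (leq0n k) (ltn_ord k))) = k.
Proof.
apply/val_inj => /=; rewrite subn0 modnDr modn_small //.
Qed.

Lemma slice_entry n1 n2 n3 (N : tensor R n1 n2 n3) k i j :
  exists a b, bcirc N a b = N k i j.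
Proof.
set z := Ordinal (leq_ltn_trans (leq0n k) (ltn_ord k)).
have := congr1 (fun M : 'M[R]_(n1, n2) => M i j) (mxblockK (fun k l => N (cidx k l)) k z).
rewrite /submxblock mxE cidx0 => <-.
by do 2 eexists.
Qed.

Lemma entry_le_tinf n1 n2 n3 (N : tensor R n1 n2 n3) k i j :
  `|N k i j| <= tnorm_inf N.
Proof.
rewrite /tnorm_inf.
apply: le_trans (le_bigmax _ _ k).
apply: le_trans (le_bigmax _ (fun i => \big[Num.max/0]_(j < n2) `|N k i j|) i).
exact: (le_bigmax _ (fun j => `|N k i j|) j).
Qed.

Lemma tinf_le n1 n2 n3 (N : tensor R n1 n2 n3) B :
  0 <= B -> (forall k i j, `|N k i j| <= B) -> tnorm_inf N <= B.
Proof.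
move=> B0 h; rewrite /tnorm_inf.
apply: bigmax_le => // k _; apply: bigmax_le => // i _; apply: bigmax_le => // j _.
Qed.

Lemma specnorm_ge0 m n (M : 'M[R]_(m, n)) : 0 <= specnorm M.
Proof.
have h := @specnorm_ub _ _ M 0; rewrite mulmx0 !vnorm0 in h; exact: h ler01.
Qed.

Lemma tinf_le_tnorm n1 n2 n3 (N : tensor R n1 n2 n3) : tnorm_inf N <= tnorm N.
Proof.
apply: tinf_le; first exact: specnorm_ge0.
move=> k i j; have [a [b <-]] := slice_entry N k i j.
exact: entry_le_specnorm.
Qed.

Lemma tnorm_bound n1 n2 n3 (N : tensor R n1 n2 n3) :
  tnorm N <= Num.sqrt ((\sum_(i < n3) n1)%:R * ((\sum_(i < n3) n2)%:R * tnorm_inf N) ^+ 2).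
Proof.
apply: specnorm_le => x x1; apply: vnorm_bound => //.
  rewrite /tnorm_inf; exact: bigmax_ge0.
move=> a b; have [k [i [j ->]]] := bcirc_entry N a b.
exact: entry_le_tinf.
Qed.

Lemma tscaleE n1 n2 n3 (N : tensor R n1 n2 n3) c k i j :
  (c *: N) k i j = c * N k i j.
Proof. by rewrite ffunE mxE. Qed.

Lemma bcirc_scale n1 n2 n3 (N : tensor R n1 n2 n3) c :
  bcirc (c *: N) = c *: bcirc N.
Proof. by apply/matrixP => a b; rewrite /bcirc /mxblock !mxE tscaleE. Qed.

Lemma unfold_scale n1 n2 n3 (N : tensor R n1 n2 n3) c :
  unfold (c *: N) = c *: unfold N.
Proof. by apply/matrixP => a b; rewrite /unfold /mxcol !mxE tscaleE. Qed.

Lemma fold_scale n1 n2 n3 (M : 'M[R]_(\sum_(i < n3) n1, n2)) c :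
  fold (c *: M) = c *: fold M.
Proof.
apply/ffunP => k; rewrite !ffunE; apply/matrixP => a b.
by rewrite /submxcol /mxsub !mxE.
Qed.

Lemma ttr_scale n1 n2 n3 (N : tensor R n1 n2 n3) c :
  ttr (c *: N) = c *: ttr N.
Proof. by apply/ffunP => k; rewrite !ffunE linearZ. Qed.

Lemma tprod_scalel n1 n2 n3 n4 (A : tensor R n1 n2 n3) (B : tensor R n2 n4 n3) c :
  tprod (c *: A) B = c *: tprod A B.
Proof. by rewrite /tprod bcirc_scale -scalemxAl fold_scale. Qed.

Lemma tprod_scaler n1 n2 n3 n4 (A : tensor R n1 n2 n3) (B : tensor R n2 n4 n3) c :
  tprod A (c *: B) = c *: tprod A B.
Proof. by rewrite /tprod unfold_scale -scalemxAr fold_scale. Qed.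

Lemma Tspace_scale n1 n2 n3 r (U : tensor R n1 r n3) (V : tensor R n2 r n3) N c :
  Tspace U V N -> Tspace U V (c *: N).
Proof.
case=> Y [W ->]; exists (c *: Y), (c *: W).
by rewrite ttr_scale tprod_scaler tprod_scalel scalerDr.
Qed.

Lemma tzeroE n1 n2 n3 : tzero R n1 n2 n3 = 0.
Proof. by apply/ffunP => k; rewrite !ffunE. Qed.

Lemma tnorm_scale_le n1 n2 n3 (N : tensor R n1 n2 n3) c :
  0 <= c -> tnorm (c *: N) <= c * tnorm N.
Proof. by move=> c0; rewrite /tnorm bcirc_scale; exact: specnorm_scale_le. Qed.

Lemma tinf_scale_le n1 n2 n3 (N : tensor R n1 n2 n3) c :
  0 <= c -> tnorm_inf (c *: N) <= c * tnorm_inf N.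
Proof.
move=> c0; apply: tinf_le.
  by rewrite mulr_ge0 // /tnorm_inf; exact: bigmax_ge0.
by move=> k i j; rewrite tscaleE normrM ger0_norm // ler_wpM2l // entry_le_tinf.
Qed.

End Proofs.

Theorem lemma2 (R : realType) (n1 n2 n3 : nat) (L0 E0 : tensor R n1 n2 n3)
  (r : nat) (U : tensor R n1 r n3) (S : tensor R r r n3) (V : tensor R n2 r n3) :
  skinny_tSVD L0 U S V ->
  xi U V * mu E0 < 1 ->
  Tspace U V `&` Omega E0 = [set tzero R n1 n2 n3].
Proof.
move=> _ hxm; rewrite predeqE => N; split; last first.
  move=> ->; split.
    rewrite tzeroE -(scale0r (tprod U (ttr 0) + tprod 0 (ttr V))).
    by apply: Tspace_scale; exists 0, 0.
  by move=> k i j _; rewrite ffunE mxE.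
case=> TN ON; apply: contrapT => Nne0.
have [k [i [j nz]]] : exists k i j, N k i j != 0.
  apply: contrapT => hall; apply: Nne0.
  suff : N = tzero R n1 n2 n3 by [].
  apply/ffunP => k; apply/matrixP => i j; rewrite !ffunE mxE.
  case: (eqVneq (N k i j) 0) => // h; exfalso; apply: hall; by exists k, i, j.
set b := tnorm_inf N; set a := tnorm N.
have b0 : 0 < b by apply: lt_le_trans (entry_le_tinf N k i j); rewrite normr_gt0.
have a0 : 0 < a by apply: lt_le_trans b0 (tinf_le_tnorm N).
have h1 : b / a <= xi U V.
  have ia : b / a <= tnorm_inf (a^-1 *: N).
    have := tinf_scale_le (a^-1 *: N) (ltW a0).
    rewrite scalerA mulfV ?gt_eqF // scale1r -/b => hb.
    by rewrite ler_pdivrMr // mulrC.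
  apply: le_trans ia _; apply: ub_le_sup.
    exists 1 => _ [M [_ hM] <-]; exact: le_trans (tinf_le_tnorm M) hM.
  exists (a^-1 *: N) => //; split; first exact: Tspace_scale.
  rewrite /=; apply: le_trans (tnorm_scale_le N _) _; first by rewrite invr_ge0 ltW.
  by rewrite -/a mulVf ?gt_eqF.
have h2 : a / b <= mu E0.
  have ia : a / b <= tnorm (b^-1 *: N).
    have := tnorm_scale_le (b^-1 *: N) (ltW b0).
    rewrite scalerA mulfV ?gt_eqF // scale1r -/a => hb.
    by rewrite ler_pdivrMr // mulrC.
  apply: le_trans ia _; apply: ub_le_sup.
    exists (Num.sqrt ((\sum_(i < n3) n1)%:R * ((\sum_(i < n3) n2)%:R * 1) ^+ 2)).
    move=> _ [M [_ hM] <-]; apply: le_trans (tnorm_bound M) _.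
    apply: ler_wsqrtr; apply: ler_wpM2l => //.
    have t0 : 0 <= tnorm_inf M by rewrite /tnorm_inf; exact: bigmax_ge0.
    have s0 : 0 <= (\sum_(i < n3) n2)%:R :> R by [].
    rewrite ler_sqr ?nnegrE ?mulr_ge0 //; exact: ler_wpM2l.
  exists (b^-1 *: N) => //; split.
    by move=> k' i' j' h; rewrite tscaleE (ON _ _ _ h) mulr0.
  rewrite /=; apply: le_trans (tinf_scale_le N _) _; first by rewrite invr_ge0 ltW.
  by rewrite -/b mulVf ?gt_eqF.
have := ler_pM (ltW (divr_gt0 b0 a0)) (ltW (divr_gt0 a0 b0)) h1 h2.
have -> : b / a * (a / b) = 1.
  by rewrite mulrA divfK ?gt_eqF // mulfV ?gt_eqF.
by move=> h; have := le_lt_trans h hxm; rewrite ltxx.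
Qed.
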